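(* For every $j\in\{1,\dots,N\}$ with $S_j\neq\emptyset$ (i.e. $S_j=(U_j^*,c_j^* )$), we have $\sum_{(U,c)\in S^*_{j-1}}p_1^{(j)}(U,c)\ge p_2^{(j-1)}(U_j^*,c_j^* )$.
   Context: Setup as for problem (P1): users $\{1,\dots,K\}$ partitioned into groups $\mathcal G_1,\dots,\mathcal G_L$; $N$ RBs; chunks are vectors $c\in\{0,1\}^N$ whose ones form a nonempty contiguous block, ${\rm Tail}(c)$ the last index of $c$, chunks intersect if they share an index; $\mathcal U$ = nonempty $U\subseteq\{1,\dots,K\}$ with $|U|\le T$, $|U\cap\mathcal G_s|\le1\ \forall s$; pairs are elements of $\mathcal U\times\mathcal C$. Metrics $p\ge0$; weights $\beta^q\in[0,1]$ ($q=1,\dots,J$); binary weights $\alpha^q\in\{0,1\}$ ($q\in\mathcal I$). A set $F$ of pairs is feasible if each group meets $U$ for at most one element of $F$, each RB lies in $c$ for at most one element, $\sum_F\beta^q\le1$ ($q\le J$) and $\sum_F\alpha^q\le1$ ($q\in\mathcal I$). Pairs $(U,c),(U',c')$ conflict if some group meets both $U,U'$, or $c,c'$ intersect, or some $q\in\mathcal I$ has $\alpha^q(U,c)=\alpha^q(U',c')=1$. $\mathcal M^{\rm narrow}$ = pairs with $\beta^q\le1/2$ for all $q\le J$; $\max_q\beta^q:=0$ if $J=0$; $(x)^+=\max\{x,0\}$. Recursion: $p_2^{(0)}=p$ on $\mathcal M^{\rm narrow}$. For $j=1,\dots,N$: let $(U_j^*,c_j^* )$ maximize $p_2^{(j-1)}$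 over pairs of $\mathcal M^{\rm narrow}$ with ${\rm Tail}(c)=j$; set $S_j=(U_j^*,c_j^* )$ if $p_2^{(j-1)}(U_j^*,c_j^* )>0$ and $S_j=\emptyset$ otherwise. Define, for $(U,c)\in\mathcal M^{\rm narrow}$, $p_1^{(j)}(U,c)=(p_2^{(j-1)}(U_j^*,c_j^* ))^+\mathbf 1[p_2^{(j-1)}(U,c)>0]$ if $(U,c)$ conflicts with $(U_j^*,c_j^* )$, and $p_1^{(j)}(U,c)=2(p_2^{(j-1)}(U_j^*,c_j^* ))^+\mathbf 1[p_2^{(j-1)}(U,c)>0]\max_{q\le J}\beta^q(U,c)$ otherwise; and $p_2^{(j)}=p_2^{(j-1)}-p_1^{(j)}$. Stacks: $S_N^*=\emptyset$ and for $j=N,\dots,1$, $S_{j-1}^*=S_j^*\cup\{S_j\}$ if $S_j\neq\emptyset$ and $S_j^*\cup\{S_j\}$ is feasible, else $S_{j-1}^*=S_j^*$. *)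

(* Defs.v *)
From HB Require Import structures.
From mathcomp Require Import all_boot all_order all_algebra.
Set Implicit Arguments. Unset Strict Implicit. Unset Printing Implicit Defensive.
Import Order.TTheory GRing.Theory Num.Theory.
Local Open Scope ring_scope.

(* Conventions:
   - users are 'I_K, groups are 'I_L, group membership is given by
     grp : 'I_K -> 'I_L (G_s = [set u | grp u == s]);
   - RBs are 'I_N; RB index i : 'I_N is the paper's RB i+1;
   - a chunk is represented by its support set c : {set 'I_N} (the set of
     indices where the 0/1 vector is 1);
   - a pair is an element of {set 'I_K} * {set 'I_N}; valid_pair says it
     lies in U x C;
   - beta : 'I_J -> pair -> R (q = 1..J), alpha : I -> pair -> bool
     (binary weights, q in the finite index set I). *)

Section Defs.
Variables (R : realFieldType) (K L N T J : nat) (I : finType).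
Variable grp : 'I_K -> 'I_L.
Variable p : {set 'I_K} * {set 'I_N} -> R.
Variable beta : 'I_J -> {set 'I_K} * {set 'I_N} -> R.
Variable alpha : I -> {set 'I_K} * {set 'I_N} -> bool.

Definition pairT := ({set 'I_K} * {set 'I_N})%type.

Definition meets (U : {set 'I_K}) (s : 'I_L) : bool := [exists u in U, grp u == s].

Definition valid_users (U : {set 'I_K}) : bool :=
  [&& U != set0, (#|U| <= T)%N & [forall s : 'I_L, (#|U :&: [set u | grp u == s]| <= 1)%N]].

Definition contiguous (c : {set 'I_N}) : bool :=
  [forall i in c, forall k in c, forall m : 'I_N, ((i <= m) && (m <= k))%N ==> (m \in c)].

Definition is_chunk (c : {set 'I_N}) : bool := (c != set0) && contiguous c.

(* Tail(c) in the paper's 1-based numbering *)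
Definition tail (c : {set 'I_N}) : nat := (\max_(i in c) i.+1)%N.

Definition valid_pair (x : pairT) : bool := valid_users x.1 && is_chunk x.2.

Definition narrow (x : pairT) : bool :=
  valid_pair x && [forall q : 'I_J, beta q x <= 1 / 2%:R].

Definition maxbeta (x : pairT) : R := \big[Num.max/0]_(q < J) beta q x.

Definition conflict (x y : pairT) : bool :=
  [|| [exists s : 'I_L, meets x.1 s && meets y.1 s],
      [exists i : 'I_N, (i \in x.2) && (i \in y.2)] |
      [exists q : I, alpha q x && alpha q y]].

Definition feasible (F : {set pairT}) : bool :=
  [&& [forall x in F, valid_pair x],
      [forall s : 'I_L, (#|[set x in F | meets x.1 s]| <= 1)%N],
      [forall i : 'I_N, (#|[set x in F | i \in x.2]| <= 1)%N],
      [forall q : 'I_J, \sum_(x in F) beta q x <= 1] &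
      [forall q : I, (#|[set x in F | alpha q x]| <= 1)%N]].

Definition posp (a : R) : R := Num.max a 0.
Definition ind (b : bool) : R := if b then 1 else 0.

(* sel j = (U_j^star, c_j^star), the chosen maximizer at step j (j = 1..N). *)
Variable sel : nat -> pairT.

(* p_1^{(j)} computed from f = p_2^{(j-1)} and s = (U_j^star, c_j^star) *)
Definition p1step (f : pairT -> R) (s x : pairT) : R :=
  if conflict x s then posp (f s) * ind (0 < f x)
  else 2%:R * posp (f s) * ind (0 < f x) * maxbeta x.

Fixpoint p2 (j : nat) : pairT -> R :=
  match j with
  | 0 => p
  | j'.+1 => fun x => p2 j' x - p1step (p2 j') (sel j'.+1) x
  end.

Definition p1 (j : nat) (x : pairT) : R := p1step (p2 j.-1) (sel j) x.

Definition S_nonempty (j : nat) : bool := 0 < p2 j.-1 (sel j).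

(* stk m = Sstar_{N-m}, for m <= N *)
Fixpoint stk (m : nat) : {set pairT} :=
  match m with
  | 0 => set0
  | m'.+1 =>
      let j := (N - m')%N in
      if S_nonempty j && feasible (sel j |: stk m') then sel j |: stk m'
      else stk m'
  end.

Definition Sstar (i : nat) : {set pairT} := stk (N - i).

End Defs.

(* Main.v *)
Require Import Defs.
From HB Require Import structures.
From mathcomp Require Import all_boot all_order all_algebra.
From mathcomp Require Import zify lra.
Set Implicit Arguments. Unset Strict Implicit. Unset Printing Implicit Defensive.
Import Order.TTheory GRing.Theory Num.Theory.
Local Open Scope ring_scope.

Section H.
Variables (R : realFieldType) (K L N T J : nat) (I : finType).
Variable grp : 'I_K -> 'I_L.
Variable p : {set 'I_K} * {set 'I_N} -> R.
Variable beta : 'I_J -> {set 'I_K} * {set 'I_N} -> R.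
Variable alpha : I -> {set 'I_K} * {set 'I_N} -> bool.
Variable sel : nat -> {set 'I_K} * {set 'I_N}.

Local Notation P2 := (p2 grp p beta alpha sel).
Local Notation STK := (stk T grp p beta alpha sel).

Lemma maxbeta_ge0 x : 0 <= maxbeta beta x.
Proof. rewrite /maxbeta; elim/big_rec: _ => //= i a _ ha; by rewrite le_max ha orbT. Qed.

Lemma maxbeta_ge q x : beta q x <= maxbeta beta x.
Proof. by rewrite /maxbeta (bigD1 q) //= le_max lexx. Qed.

Lemma posp_ge0 (a : R) : 0 <= posp a.
Proof. by rewrite /posp le_max lexx orbT. Qed.

Lemma ind_ge0 b : 0 <= ind R b.
Proof. by case: b; rewrite /ind ?ler01. Qed.

Lemma p1step_ge0 f s x : 0 <= p1step grp beta alpha f s x.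
Proof.
rewrite /p1step; case: ifP => _.
  by rewrite mulr_ge0 ?posp_ge0 ?ind_ge0.
by rewrite !mulr_ge0 ?posp_ge0 ?ind_ge0 ?maxbeta_ge0 ?ler0n.
Qed.

Lemma p2_mono a d x : P2 (a + d) x <= P2 a x.
Proof.
elim: d => [|d IH]; first by rewrite addn0.
rewrite addnS /=; apply: le_trans IH.
by rewrite lerBlDr lerDl p1step_ge0.
Qed.

Lemma conflict_self x : valid_pair T grp x -> conflict grp alpha x x.
Proof.
case/andP=> /and3P[/set0Pn[u Hu] _ _] _.
apply/orP; left; apply/existsP; exists (grp u); rewrite andbb.
by apply/existsP; exists u; rewrite Hu eqxx.
Qed.

Lemma card_U1 (T0 : finType) (y : T0) (S : {set T0}) (P : pred T0) :
  (P y -> forall x, x \in S -> ~~ P x) -> (#|[set x in S | P x]| <= 1)%N ->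
  (#|[set x in y |: S | P x]| <= 1)%N.
Proof.
move=> H HS; case Py: (P y).
  rewrite -(cards1 y); apply: subset_leq_card; apply/subsetP => x.
  rewrite !inE => /andP[/orP[/eqP->|xS] Px]; first by rewrite eqxx.
  by have:= H Py x xS; rewrite Px.
apply: leq_trans HS; apply: subset_leq_card; apply/subsetP => x.
rewrite !inE => /andP[/orP[/eqP->|xS] Px]; first by rewrite Py in Px.
by rewrite xS Px.
Qed.

Lemma feasible0 : feasible T grp beta alpha set0.
Proof.
apply/and5P; split.
- by apply/forallP => x; rewrite inE.
- by apply/forallP => s; rewrite (_ : [set _ in _ | _] = set0) ?cards0 //; apply/setP => x; rewrite !inE.
- by apply/forallP => s; rewrite (_ : [set _ in _ | _] = set0) ?cards0 //; apply/setP => x; rewrite !inE.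
- by apply/forallP => q; rewrite big_set0 ler01.
- by apply/forallP => s; rewrite (_ : [set _ in _ | _] = set0) ?cards0 //; apply/setP => x; rewrite !inE.
Qed.

Lemma stk_feasible m : feasible T grp beta alpha (STK m).
Proof.
elim: m => [|m IH] /=; first exact: feasible0.
by case: ifP => // /andP[].
Qed.

Lemma stk_mem m x : (m <= N)%N -> x \in STK m ->
  exists k, [/\ (N - m < k <= N)%N, x = sel k & S_nonempty grp p beta alpha sel k].
Proof.
elim: m => [|m IH] hm /=; first by rewrite inE.
case: ifP => [/andP[hS _]|_] hx.
  move: hx; rewrite in_setU1 => /orP[/eqP->|hx].
    by exists (N - m)%N; split => //; lia.
  have [k [hk -> hk2]] := IH (ltnW hm) hx; exists k; split => //; lia.
have [k [hk -> hk2]] := IH (ltnW hm) hx; exists k; split => //; lia.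
Qed.

End H.

Theorem lemma1 (R : realFieldType) (K L N T J : nat) (I : finType)
  (grp : 'I_K -> 'I_L)
  (p : {set 'I_K} * {set 'I_N} -> R)
  (beta : 'I_J -> {set 'I_K} * {set 'I_N} -> R)
  (alpha : I -> {set 'I_K} * {set 'I_N} -> bool)
  (sel : nat -> {set 'I_K} * {set 'I_N})
  (hp : forall x, valid_pair T grp x -> 0 <= p x)
  (hbeta : forall q x, valid_pair T grp x -> 0 <= beta q x <= 1)
  (hsel : forall j, (1 <= j <= N)%N ->
     [/\ narrow T grp beta (sel j),
         tail (sel j).2 = j &
         forall x, narrow T grp beta x -> tail x.2 = j ->
           p2 grp p beta alpha sel j.-1 x <= p2 grp p beta alpha sel j.-1 (sel j)])
  (j : nat) (hj : (1 <= j <= N)%N)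
  (hSj : S_nonempty grp p beta alpha sel j) :
  p2 grp p beta alpha sel j.-1 (sel j)
    <= \sum_(x in Sstar T grp p beta alpha sel j.-1) p1 grp p beta alpha sel j x.
Proof.
have [hn _ _] := hsel j hj.
have hv : valid_pair T grp (sel j) by case/andP: hn.
set f := p2 grp p beta alpha sel j.-1.
have fs0 : 0 < f (sel j) by [].
have pf : posp (f (sel j)) = f (sel j) by rewrite /posp max_l // ltW.
set S := stk T grp p beta alpha sel (N - j).
have SE : Sstar T grp p beta alpha sel j.-1 =
  if S_nonempty grp p beta alpha sel j && feasible T grp beta alpha (sel j |: S)
  then sel j |: S else S.
  rewrite /Sstar (_ : (N - j.-1 = (N - j).+1)%N); last lia.
  by rewrite /= (_ : (N - (N - j) = j)%N) //; lia.
have fpos : forall x, x \in S -> 0 < f x.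
  move=> x xS; have [|k [hk -> hk2]] := stk_mem _ xS; first lia.
  apply: lt_le_trans hk2 _; rewrite /f (_ : k.-1 = j.-1 + (k.-1 - j.-1))%N; last lia.
  exact: p2_mono.
have p1ge : forall x, 0 <= p1 grp p beta alpha sel j x by move=> x; exact: p1step_ge0.
have p1c : forall x, conflict grp alpha x (sel j) -> 0 < f x ->
    p1 grp p beta alpha sel j x = f (sel j).
  by move=> x hc hx; rewrite /p1 /p1step -/f hc pf hx /ind mulr1.
have sumge : forall (A : {set _}) x, x \in A ->
    p1 grp p beta alpha sel j x <= \sum_(y in A) p1 grp p beta alpha sel j y.
  move=> A x xA; rewrite (bigD1 x) //= lerDl; exact: sumr_ge0.
rewrite SE; case: ifP => [_|].
  apply: le_trans (sumge _ (sel j) (setU11 _ _)).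
  by rewrite p1c // (conflict_self _ hv).
rewrite hSj /= => hinf.
have [/exists_inP[x xS hc]|/exists_inPn ncx] :=
  boolP [exists x in S, conflict grp alpha x (sel j)].
  by apply: le_trans (sumge _ x xS); rewrite p1c // fpos.
have sS : sel j \notin S.
  by apply/negP => h; have:= ncx _ h; rewrite (conflict_self _ hv).
have hb := forallP (proj2 (andP hn)).
have [q hq] : exists q, 1 / 2%:R < \sum_(x in S) beta q x.
  case: (boolP [exists q, 1 / 2%:R < \sum_(x in S) beta q x]) => [/existsP//|/existsPn hq].
  suff: feasible T grp beta alpha (sel j |: S) by rewrite hinf.
  have /and5P[F1 F2 F3 F4 F5] := @stk_feasible R K L N T J I grp p beta alpha sel (N - j).
  apply/and5P; split.
  - apply/forall_inP => x; rewrite in_setU1 => /orP[/eqP->//|xS]; exact: (forall_inP F1).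
  - apply/forallP => s; apply: card_U1; last exact: (forallP F2 s).
    move=> hs x xS; apply: contra (ncx x xS) => hx; apply/orP; left.
    by apply/existsP; exists s; rewrite hx hs.
  - apply/forallP => s; apply: card_U1; last exact: (forallP F3 s).
    move=> hs x xS; apply: contra (ncx x xS) => hx; apply/orP; right; apply/orP; left.
    by apply/existsP; exists s; rewrite hx hs.
  - apply/forallP => q; rewrite big_setU1 //=.
    have := hb q; move: (hq q); rewrite -leNgt; lra.
  - apply/forallP => s; apply: card_U1; last exact: (forallP F5 s).
    move=> hs x xS; apply: contra (ncx x xS) => hx; apply/orP; right; apply/orP; right.
    by apply/existsP; exists s; rewrite hx hs.
apply: le_trans (_ : 2%:R * f (sel j) * \sum_(x in S) beta q x <= _).
  by nra.
rewrite mulr_sumr; apply: ler_sum => x xS.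
rewrite /p1 /p1step -/f (negbTE (ncx x xS)) pf (fpos x xS) /ind mulr1.
by apply: ler_wpM2l; [rewrite mulr_ge0 // ?ler0n ltW | exact: maxbeta_ge].
Qed.
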